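(* Let $M$ be a finitely generated abelian group. For every $e\in\mathbb{Z}\oplus M$ there exists $\tilde d\in\mathbb{Z}\oplus M$ such that $M\cong(\mathbb{Z}\oplus M)/\langle e,\tilde d\rangle$, where $\langle e,\tilde d\rangle$ is the subgroup generated by $e$ and $\tilde d$. *)

(* Defs.v *)
From HB Require Import structures.
From mathcomp Require Import all_boot all_order all_algebra.
Set Implicit Arguments. Unset Strict Implicit. Unset Printing Implicit Defensive.
Import Order.TTheory GRing.Theory Num.Theory.
Local Open Scope ring_scope.

Definition fin_gen (M : zmodType) : Prop :=
  exists s : seq M, forall x : M,
    exists c : seq int, size c = size s /\
      x = \sum_(i < size s) (s`_i *~ c`_i).

Definition in_gen2 (G : zmodType) (e d : G) (x : G) : Prop :=
  exists a b : int, x = e *~ a + d *~ b.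

(* M is isomorphic to G / H (H given as a predicate, a subgroup) iff there is a
   surjective group homomorphism G -> M with kernel exactly H
   (first isomorphism theorem). *)
Definition iso_quot (G M : zmodType) (H : G -> Prop) : Prop :=
  exists f : G -> M,
    (forall x y, f (x + y) = f x + f y) /\
    (forall y : M, exists x : G, f x = y) /\
    (forall x : G, f x = 0 <-> H x).

(* Main.v *)
Require Import Defs.
From HB Require Import structures.
From mathcomp Require Import all_boot all_order all_algebra.
From Stdlib Require Import Classical.
Import Order.TTheory GRing.Theory Num.Theory.
Local Open Scope ring_scope.

Section Closure.
Variable V : zmodType.
Variable P : V -> Prop.
Hypothesis P0 : P 0.
Hypothesis PB : forall x y, P x -> P y -> P (x - y).

Lemma clN x : P x -> P (- x).
Proof. by move=> Px; rewrite -sub0r; apply: (PB). Qed.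

Lemma clD x y : P x -> P y -> P (x + y).
Proof. by move=> Px Py; rewrite -[y]opprK; apply: (PB) => //; apply: clN. Qed.

Lemma clZ x (j : int) : P x -> P (x *~ j).
Proof.
move=> Px; have Hn : forall n : nat, P (x *+ n).
  by elim=> [|n IH]; rewrite ?mulr0n // mulrS; apply: clD.
by case: j => n; rewrite ?NegzE ?mulrNz; [apply: Hn | apply: clN; apply: Hn].
Qed.
End Closure.

Lemma min_ex (Q : nat -> Prop) : (exists n, Q n) -> exists n, Q n /\ forall m, Q m -> (n <= m)%N.
Proof.
move=> [n Qn]; apply: NNPP => H.
have K : forall k m, (m <= k)%N -> ~ Q m.
  elim=> [|k IH] m.
    rewrite leqn0 => /eqP -> Q0; apply: H; exists 0%N; split => // m' _.
  rewrite leq_eqVlt => /orP [/eqP -> Qk|]; last by rewrite ltnS; apply: IH.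
  apply: H; exists k.+1; split => // m' Qm'; rewrite leqNgt; apply/negP => lt.
  by apply: (IH m') => //; rewrite -ltnS.
exact: (K n n (leqnn n)).
Qed.

Lemma int_ideal (I : int -> Prop) : I 0 -> (forall x y, I x -> I y -> I (x - y)) ->
  exists t, I t /\ forall x, I x -> exists j : int, x = j * t.
Proof.
move=> I0 IB.
case: (classic (exists x, I x /\ x != 0)) => [[x [Ix nx]]|Hno]; last first.
  exists 0; split => // x Ix; exists 0; rewrite mulr0.
  by apply: NNPP => nx; apply: Hno; exists x; split => //; apply/eqP.
have [n [[Pn In] Hmin]] : exists n : nat, ((0 < n)%N /\ I n%:Z) /\
    forall m : nat, ((0 < m)%N /\ I m%:Z) -> (n <= m)%N.
  apply: min_ex; exists `|x|%N; split; first by rewrite absz_gt0.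
  case: x Ix nx => n Ix nx /=; first by [].
  by move: Ix; rewrite NegzE => /(clN _ _ I0 IB); rewrite opprK.
exists n; split => // y Iy.
have t0 : (n%:Z != 0) by rewrite eqz_nat -lt0n.
have Ir : I (y %% n)%Z.
  have -> : (y %% n)%Z = y - n%:Z *~ (y %/ n)%Z by rewrite -mulrzl intz; apply/eqP; rewrite eq_sym subr_eq addrC -divz_eq.
  by apply: (IB) => //; apply: (clZ _ _ I0 IB).
have r0 : (y %% n)%Z = 0.
  have := modz_ge0 y t0; have : 0 < n%:Z by rewrite ltz_nat.
  move/(ltz_pmod y).
  case E: (y %% n)%Z => [r|r] // lt _; apply/eqP; rewrite eqz_nat; apply/negP => /negP r0.
  have := Hmin r; rewrite lt0n r0 -E => /(_ (conj isT Ir)).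
  by move: lt; rewrite ltz_nat ltnNge => /negP.
by exists (y %/ n)%Z; rewrite {1}(divz_eq y n) r0 addr0.
Qed.

Lemma noeth g (P : 'cV[int]_g -> Prop) : P 0 -> (forall x y, P x -> P y -> P (x - y)) ->
  exists A : 'M[int]_g, forall v, P v <-> exists u, v = A *m u.
Proof.
elim: g P => [|g IH] P P0 PB.
  exists 0 => v; split => _; first by exists 0; rewrite !flatmx0.
  by rewrite flatmx0.
suff: forall (P : 'cV[int]_(1 + g) -> Prop), P 0 -> (forall x y, P x -> P y -> P (x - y)) ->
  exists A : 'M[int]_(1 + g), forall v, P v <-> exists u, v = A *m u by move/(_ P P0 PB).
clear P P0 PB => P P0 PB.
have cB : forall (a b : 'M[int]_(1,1)) (x y : 'cV[int]_g), col_mx a x - col_mx b y = col_mx (a - b) (x - y).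
  by move=> a b x y; rewrite opp_col_mx add_col_mx.
have [A' HA'] : exists A' : 'M[int]_g, forall v, P (col_mx 0 v) <-> exists u, v = A' *m u.
  apply: IH; first by rewrite col_mx0.
  by move=> x y Px Py; rewrite -[0 : 'M_(1,1)]subr0 -cB; apply: (PB).
have [t [[vt Pt] Ht]] : exists t : int, (exists vt : 'cV[int]_g, P (col_mx t%:M vt)) /\
    forall x : int, (exists v : 'cV[int]_g, P (col_mx x%:M v)) -> exists j : int, x = j * t.
  apply: (int_ideal (fun x => exists v, P (col_mx x%:M v))); first by exists 0; rewrite raddf0 col_mx0.
  move=> x y [vx Px] [vy Py]; exists (vx - vy); rewrite raddfB -cB; exact: (PB).
exists (block_mx t%:M 0 vt A') => v; split.
  move=> Pv; rewrite -(vsubmxK v) in Pv *; move: Pv.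
  rewrite [usubmx v]mx11_scalar; set x := usubmx v 0 0; set v' := dsubmx v => Pv.
  have [j xj] := Ht x (ex_intro _ v' Pv).
  have : P (col_mx x%:M v' - j *: col_mx t%:M vt).
    by apply: (PB) => //; rewrite -[j]intz scaler_int; apply: (clZ _ _ P0 PB).
  rewrite scale_col_mx scale_scalar_mx -xj cB subrr => /HA' [u' Hu'].
  exists (col_mx j%:M u'); rewrite mul_block_col mul0mx addr0 -scalar_mxM mul_mx_scalar mulrC -xj.
  by rewrite -Hu' addrC subrK.
move=> [u ->]; rewrite -(vsubmxK u) mul_block_col [usubmx u]mx11_scalar mul0mx addr0.
rewrite -scalar_mxM mul_mx_scalar.
have -> : col_mx (t * usubmx u 0 0)%:M (usubmx u 0 0 *: vt + A' *m dsubmx u) =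
  usubmx u 0 0 *: col_mx t%:M vt + col_mx 0 (A' *m dsubmx u).
  by rewrite scale_col_mx add_col_mx scale_scalar_mx addr0 mulrC.
apply: (clD _ _ P0 PB); last by apply/HA'; exists (dsubmx u).
rewrite -[usubmx u 0 0]intz scaler_int; exact: (clZ _ _ P0 PB).
Qed.
Lemma tr_im k (X : 'M[int]_k) : exists S : 'M[int]_k, S \in unitmx /\
  forall v : 'cV[int]_k, (exists u, v = X *m u) <-> (exists u, S *m v = X^T *m u).
Proof.
have [L uL [R uR [d _ E]]] := int_Smith_normal_form X.
set D := \matrix_(i, j) _ in E.
have DT : D^T = D.
  apply/matrixP => i j; rewrite !mxE eq_sym; case: eqP => [/val_inj -> //|].
  by rewrite !mulr0n.
have XT : X^T = R^T *m (D *m L^T) by rewrite E !trmx_mul DT mulmxA.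
have uLT : L^T \in unitmx by rewrite unitmx_tr.
have uRT : R^T \in unitmx by rewrite unitmx_tr.
exists (R^T *m invmx L); split; first by rewrite unitmx_mul uRT unitmx_inv.
move=> v; split.
  move=> [u ->]; exists (invmx L^T *m (R *m u)).
  rewrite XT E -!mulmxA (mulKmx uL) (mulKVmx uLT) //.
move=> [u Hu]; exists (invmx R *m (L^T *m u)).
move: Hu; rewrite XT E -!mulmxA (mulKVmx uR) => /(congr1 (mulmx (invmx R^T))).
rewrite !(mulKmx uRT) => /(congr1 (mulmx L)); rewrite (mulKVmx uL) => -> //.
Qed.
Section Main.
Variable M : zmodType.
Variable s : seq M.

Definition piv (v : 'cV[int]_(size s)) : M := \sum_(i < size s) s`_i *~ v i 0.

Lemma pivD v1 v2 : piv (v1 + v2) = piv v1 + piv v2.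
Proof. by rewrite /piv -big_split; apply: eq_bigr => i _; rewrite mxE mulrzDr. Qed.
Lemma pivZ (a : int) v : piv (a *: v) = piv v *~ a.
Proof. by rewrite /piv mulrz_suml; apply: eq_bigr => i _; rewrite mxE mulrC mulrzA. Qed.
Lemma pivB v1 v2 : piv (v1 - v2) = piv v1 - piv v2.
Proof. by rewrite pivD -scaleN1r pivZ mulrN1z. Qed.
Lemma piv0 : piv 0 = 0.
Proof. by rewrite -[0 : 'cV[int]_(size s)](subrr 0) pivB subrr. Qed.

Definition rho (v : 'cV[int]_(1 + size s)) : int * M := (usubmx v 0 0, piv (dsubmx v)).

Lemma pair_mulrz (x : int * M) (a : int) : x *~ a = (x.1 *~ a, x.2 *~ a).
Proof.
have H : forall k : nat, x *+ k = (x.1 *+ k, x.2 *+ k).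
  by elim=> [|k IH]; rewrite ?mulr0n // !mulrS IH.
by case: a => k; rewrite ?NegzE ?mulrNz -!pmulrn H.
Qed.

Lemma rhoD v1 v2 : rho (v1 + v2) = rho v1 + rho v2.
Proof.
rewrite /rho -[v1]vsubmxK -[v2]vsubmxK add_col_mx !col_mxKu !col_mxKd mxE pivD.
by [].
Qed.

Lemma rhoZ (a : int) v : rho (a *: v) = rho v *~ a.
Proof.
rewrite pair_mulrz /rho -[v]vsubmxK scale_col_mx !col_mxKu !col_mxKd mxE pivZ /=.
by rewrite -mulrzr intz mulrC.
Qed.

Variable A : 'M[int]_(size s).
Hypothesis HA : forall v, piv v = 0 <-> exists u, v = A *m u.
Variable n : int.
Variable mu : 'cV[int]_(size s).

Definition B0 : 'M[int]_(1 + size s) := block_mx 1%:M 0 0 A.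
Definition Be : 'M[int]_(1 + size s) := block_mx n%:M 0 mu A.

Lemma kerB0 v : piv (dsubmx v) = 0 <-> exists u, v = B0 *m u.
Proof.
split.
  move/HA => [u' Hu']; exists (col_mx (usubmx v) u').
  by rewrite /B0 mul_block_col !mul1mx !mul0mx addr0 add0r -Hu' vsubmxK.
move=> [u ->]; apply/HA; rewrite -[u]vsubmxK /B0 mul_block_col col_mxKd mul0mx add0r.
by exists (dsubmx u).
Qed.

Lemma imB0T v : (exists u, v = B0^T *m u) <->
  exists u (j : 'M[int]_1), v = Be^T *m u + col_mx j 0.
Proof.
rewrite /B0 /Be !tr_block_mx !tr_scalar_mx !trmx0; split.
  move=> [u ->]; exists (col_mx 0 (dsubmx u)); exists (usubmx u - mu^T *m dsubmx u).
  rewrite -{1}[u]vsubmxK !mul_block_col !mul0mx !mul1mx add_col_mx !addr0 !add0r.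
  by rewrite mulmx0 add0r addrCA subrr addr0.
move=> [u [j ->]]; exists (col_mx (n%:M *m usubmx u + mu^T *m dsubmx u + j) (dsubmx u)).
rewrite -{1}[u]vsubmxK !mul_block_col !mul0mx !mul1mx add_col_mx !addr0 !add0r.
by [].
Qed.

Lemma dsubD (v1 v2 : 'cV[int]_(1 + size s)) : dsubmx (v1 + v2) = dsubmx v1 + dsubmx v2.
Proof. by rewrite -[v1]vsubmxK -[v2]vsubmxK add_col_mx !col_mxKd. Qed.
Lemma dsubZ (a : int) (v : 'cV[int]_(1 + size s)) : dsubmx (a *: v) = a *: dsubmx v.
Proof. by rewrite -[v]vsubmxK scale_col_mx !col_mxKd. Qed.

Lemma rhoB v1 v2 : rho (v1 - v2) = rho v1 - rho v2.
Proof. by rewrite rhoD -scaleN1r rhoZ mulrN1z. Qed.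

Variables S0 Se : 'M[int]_(1 + size s).
Hypothesis uS0 : S0 \in unitmx.
Hypothesis uSe : Se \in unitmx.
Hypothesis HS0 : forall v : 'cV[int]_(1 + size s), (exists u, v = B0 *m u) <-> (exists u, S0 *m v = B0^T *m u).
Hypothesis HSe : forall v : 'cV[int]_(1 + size s), (exists u, v = Be *m u) <-> (exists u, Se *m v = Be^T *m u).

Definition Phi v := piv (dsubmx (invmx S0 *m (Se *m v))).
Definition w : 'cV[int]_(1 + size s) := invmx Se *m col_mx (1%:M : 'M[int]_1) 0.

Lemma PhiD v1 v2 : Phi (v1 + v2) = Phi v1 + Phi v2.
Proof. by rewrite /Phi !mulmxDr dsubD pivD. Qed.
Lemma PhiZ (a : int) v : Phi (a *: v) = Phi v *~ a.
Proof. by rewrite /Phi -!scalemxAr dsubZ pivZ. Qed.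
Lemma PhiB v1 v2 : Phi (v1 - v2) = Phi v1 - Phi v2.
Proof. by rewrite PhiD -scaleN1r PhiZ mulrN1z. Qed.

Lemma Sew (j : 'M[int]_1) : Se *m (w *m j) = col_mx j 0.
Proof. by rewrite /w mulmxA (mulKVmx uSe) mul_col_mx mul1mx mul0mx. Qed.

Lemma keyPhi v : Phi v = 0 <-> exists u (j : 'M[int]_1), v = Be *m u + w *m j.
Proof.
have E1 : Phi v = 0 <-> exists u, Se *m v = B0^T *m u.
  rewrite /Phi; split.
    by move/kerB0/HS0; rewrite (mulKVmx uS0).
  by move=> H; apply/kerB0/HS0; rewrite (mulKVmx uS0).
split.
  move=> H0; have := proj1 E1 H0; move/imB0T => [u [j Hj]].
  have [u' Hu'] : exists u', v - w *m j = Be *m u'.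
    by apply/HSe; exists u; rewrite mulmxBr Sew Hj addrK.
  by exists u', j; rewrite -Hu' subrK.
move=> [u [j Hv]]; apply: (proj2 E1); rewrite Hv; apply/imB0T.
have [u'' Hu''] : exists u'', Se *m (Be *m u) = Be^T *m u'' by apply/HSe; exists u.
by exists u'', j; rewrite mulmxDr Sew Hu''.
Qed.

Lemma rho_ker v : rho v = 0 -> Phi v = 0.
Proof.
move=> H; have h1 := congr1 fst H; have h2 := congr1 snd H; rewrite /= in h1 h2.
move/HA: h2 => [u' Hu'].
apply/keyPhi; exists (col_mx 0 u'), 0.
rewrite mulmx0 addr0 /Be mul_block_col !mulmx0 !add0r -Hu'.
by rewrite mul0mx -{1}[v]vsubmxK [usubmx v]mx11_scalar h1 raddf0.
Qed.

Lemma rho_Be u : rho (Be *m u) = (n, piv mu) *~ (usubmx u 0 0).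
Proof.
set u0 := usubmx u 0 0; have Hu0 : usubmx u = u0%:M by apply: mx11_scalar.
rewrite pair_mulrz /rho /Be -[u]vsubmxK mul_block_col col_mxKu col_mxKd mul0mx addr0 pivD.
have -> : piv (A *m dsubmx u) = 0 by apply/HA; exists (dsubmx u).
rewrite addr0 Hu0 !mul_mx_scalar pivZ !mxE eqxx mulr1n /=.
by rewrite -mulrzr intz mulrC.
Qed.

Hypothesis surj : forall x : M, exists v, piv v == x.

Lemma main_sec : exists d : int * M, iso_quot M (in_gen2 (n, piv mu) d).
Proof.
pose sig (x : int * M) : 'cV[int]_(1 + size s) := col_mx (x.1)%:M (xchoose (surj x.2)).
have rho_sig x : rho (sig x) = x.
  rewrite /rho /sig col_mxKu col_mxKd mxE eqxx mulr1n (eqP (xchooseP (surj x.2))).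
  by case: x.
pose f x := Phi (sig x).
have f_rho v : f (rho v) = Phi v.
  have : Phi (sig (rho v) - v) = 0 by apply: rho_ker; rewrite rhoB rho_sig subrr.
  by rewrite PhiB => /eqP; rewrite subr_eq0 => /eqP.
exists (rho w), f; split; [|split].
- move=> x y; have -> : x + y = rho (sig x + sig y) by rewrite rhoD !rho_sig.
  by rewrite f_rho PhiD.
- move=> y; pose v0 : 'cV[int]_(1 + size s) := col_mx 0 (xchoose (surj y)).
  exists (rho (invmx Se *m (S0 *m v0))); rewrite f_rho /Phi (mulKVmx uSe) (mulKmx uS0).
  by rewrite /v0 col_mxKd (eqP (xchooseP (surj y))).
- move=> x; split.
    move=> fx; move: (fx); rewrite /f => /keyPhi [u [j Hj]].
    rewrite -(rho_sig x) Hj rhoD rho_Be [j]mx11_scalar mul_mx_scalar rhoZ.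
    by exists (usubmx u 0 0), (j 0 0).
  move=> [a [b ->]].
  have -> : (n, piv mu) *~ a + rho w *~ b = rho (Be *m col_mx a%:M 0 + w *m b%:M).
    by rewrite rhoD rho_Be mul_mx_scalar rhoZ col_mxKu mxE eqxx mulr1n.
  by rewrite f_rho; apply/keyPhi; exists (col_mx a%:M 0), b%:M.
Qed.

End Main.

Theorem lemma5p3 (M : zmodType) (hM : fin_gen M) (e : (int * M)%type) :
  exists d : (int * M)%type, iso_quot M (in_gen2 e d).
Proof.
case: hM => s hs.
have surj : forall x : M, exists v, piv M s v == x.
  move=> x; have [c [_ ->]] := hs x; exists (\col_(i < size s) c`_i); apply/eqP.
  by rewrite /piv; apply: eq_bigr => i _; rewrite mxE.
have PB : forall x y, piv M s x = 0 -> piv M s y = 0 -> piv M s (x - y) = 0.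
  by move=> x y hx hy; rewrite pivB hx hy subrr.
have [A HA] := noeth (size s) (fun v => piv M s v = 0) (piv0 M s) PB.
have [mu /eqP Hmu] := surj e.2.
have [S0 [uS0 HS0]] := tr_im (1 + size s) (B0 M s A).
have [Se [uSe HSe]] := tr_im (1 + size s) (Be M s A e.1 mu).
have := @main_sec M s A HA e.1 mu S0 Se uS0 uSe HS0 HSe surj.
by rewrite Hmu -surjective_pairing.
Qed.
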